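(* Let $n,b$ be integers with $1<n<b$. The $(n,b)$-Hoey-Sloane graph $\Gamma$ is symmetric, i.e. $\Gamma=\overline{\Gamma}$ as edge-labelled graphs.
   Context: Let $\lambda(x)$ denote the least non-negative residue of $x$ modulo $b$. The $(n,b)$-mother graph $M$ is the directed graph on vertex set $\{0,\ldots,b-1\}$ whose edges are the ordered pairs of digits $(d_1,d_2)$ with $\lambda(d_1+(b-n)d_2)\le n-1$. The $(n,b)$-Hoey-Sloane graph $\Gamma$ is the edge-labelled directed graph with vertex set $\{0,\ldots,n-1\}$ in which $(c_1,c_2)$ is an edge precisely when the set $\{(d_1,d_2)\in E(M) \mid n d_2-d_1+c_1=b c_2\}$ is nonempty, this set being its collection of edge labels. For a state $c$ write $\overline{c}=n-1-c$ and for a digit $d$ write $\overline{d}=b-1-d$. For an edge-labelled subgraph $\Gamma_0$ of $\Gamma$, its reflection $\overline{\Gamma}_0$ is the edge-labelled graph whose vertices are the $\overline{c}$ for vertices $c$ of $\Gamma_0$, whose edges are the $(\overline{c}_1,\overline{c}_2)$ for edges $(c_1,c_2)$ of $\Gamma_0$, and in which $(\overline{d}_1,\overline{d}_2)$ is a label of $(\overline{c}_1,\overline{c}_2)$ whenever $(d_1,d_2)$ is a label of $(c_1,c_2)$ in $\Gamma_0$. $\Gamma_0$ is symmetric if $\Gamma_0=\overline{\Gamma}_0$. *)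

(* Defs.v *)
From mathcomp Require Import all_boot all_algebra.
Set Implicit Arguments. Unset Strict Implicit. Unset Printing Implicit Defensive.
Import GRing.Theory.

Definition lam (b x : nat) : nat := x %% b.

Definition is_digit (b d : nat) : bool := d < b.
Definition is_state (n c : nat) : bool := c < n.

(* edges of the (n,b)-mother graph (n < b so b - n is the honest difference) *)
Definition mother_edge (n b d1 d2 : nat) : bool :=
  [&& is_digit b d1, is_digit b d2 & lam b (d1 + (b - n) * d2) <= n - 1].

Definition hs_label (n b c1 c2 d1 d2 : nat) : bool :=
  [&& is_state n c1, is_state n c2, mother_edge n b d1 d2 &
      ((n * d2)%:Z - d1%:Z + c1%:Z == (b * c2)%:Z)%R].

Definition hs_edge (n b c1 c2 : nat) : Prop :=
  is_state n c1 /\ is_state n c2 /\ exists d1 d2, hs_label n b c1 c2 d1 d2.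

Definition cbar (n c : nat) : nat := n - 1 - c.
Definition dbar (b d : nat) : nat := b - 1 - d.

Definition refl_vertex (n c : nat) : Prop :=
  exists c0, is_state n c0 /\ c = cbar n c0.
Definition refl_edge (n b c1 c2 : nat) : Prop :=
  exists e1 e2, hs_edge n b e1 e2 /\ c1 = cbar n e1 /\ c2 = cbar n e2.
Definition refl_label (n b c1 c2 d1 d2 : nat) : Prop :=
  exists e1 e2 f1 f2, hs_label n b e1 e2 f1 f2 /\
    c1 = cbar n e1 /\ c2 = cbar n e2 /\ d1 = dbar b f1 /\ d2 = dbar b f2.

Definition hs_symmetric (n b : nat) : Prop :=
  (forall c, is_state n c <-> refl_vertex n c) /\
  (forall c1 c2, hs_edge n b c1 c2 <-> refl_edge n b c1 c2) /\
  (forall c1 c2 d1 d2, hs_label n b c1 c2 d1 d2 <-> refl_label n b c1 c2 d1 d2).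

(* Main.v *)
Require Import Defs.
From mathcomp Require Import all_boot all_algebra.
From mathcomp Require Import zify ring.
Local Open Scope ring_scope.

Lemma zB (x y : nat) : (y <= x)%N -> ((x - y)%N)%:Z = x%:Z - y%:Z.
Proof. move=> h; lia. Qed.

Lemma modpart (b n X Y : nat) : (1 < n)%N -> (n < b)%N -> (X + Y = b * (b - n) + (n - 1))%N ->
  (X %% b <= n - 1)%N -> (Y %% b <= n - 1)%N.
Proof.
move=> h1 h2 hXY hx.
have hm : ((X %% b + Y %% b) %% b = n - 1)%N.
  rewrite modnDm hXY mulnC modnMDl modn_small //; lia.
have := div.ltn_pmod X (ltn_trans (ltnW h1) h2).
have := div.ltn_pmod Y (ltn_trans (ltnW h1) h2).
move: hm; set rx := (X %% b)%N; set ry := (Y %% b)%N => hm hy hX.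
have e := divn_eq (rx + ry) b. rewrite hm in e.
move: e; set k := ((rx + ry) %/ b)%N => e.
case: k e => [|k] e; first lia.
have : (b <= k.+1 * b)%N by rewrite leq_pmull.
lia.
Qed.

Lemma t1 (n b d1 d2 : nat) : (1 < n)%N -> (n < b)%N -> (d1 < b)%N -> (d2 < b)%N ->
 ((d1 + (b - n) * d2) + (b - 1 - d1 + (b - n) * (b - 1 - d2)) = b * (b - n) + (n - 1))%N.
Proof.
move=> h1 h2 e1 e2.
apply/eqP; rewrite -eqz_nat; apply/eqP.
rewrite !PoszD !PoszM !zB; try lia; ring.
Qed.

Lemma refl_lab n b c1 c2 d1 d2 : (1 < n)%N -> (n < b)%N -> hs_label n b c1 c2 d1 d2 ->
  hs_label n b (cbar n c1) (cbar n c2) (dbar b d1) (dbar b d2).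
Proof.
move=> h1 h2 /and4P[s1 s2 /and3P[e1 e2 e3] /eqP e4].
rewrite /hs_label /mother_edge /is_state /is_digit /cbar /dbar /lam in s1 s2 e1 e2 e3 e4 *.
apply/and4P; split; try lia.
  apply/and3P; split; try lia.
  exact: (@modpart b n _ _ h1 h2 (@t1 _ _ _ _ h1 h2 e1 e2) e3).
apply/eqP.
rewrite !PoszM !zB; try lia.
Qed.

Local Close Scope ring_scope.
Lemma cbarK n c : (c < n)%N -> cbar n (cbar n c) = c.
Proof. rewrite /cbar; lia. Qed.
Lemma dbarK b d : (d < b)%N -> dbar b (dbar b d) = d.
Proof. rewrite /dbar; lia. Qed.

Lemma lab_bounds n b c1 c2 d1 d2 : hs_label n b c1 c2 d1 d2 ->
  [/\ (c1 < n)%N, (c2 < n)%N, (d1 < b)%N & (d2 < b)%N].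
Proof. by case/and4P=> ? ? /and3P[? ? _] _. Qed.

Theorem corollary12 (n b : nat) (h1n : 1 < n) (hnb : n < b) : hs_symmetric n b.
Proof.
split; [|split].
- move=> c; split.
    move=> hc; exists (cbar n c); split; last by rewrite cbarK.
    rewrite /is_state /cbar in hc *; lia.
  case=> c0 [h ->]; rewrite /is_state /cbar in h *; lia.
- move=> c1 c2; split.
    case=> s1 [s2 [d1 [d2 hl]]].
    exists (cbar n c1), (cbar n c2); rewrite !cbarK //; split=> //.
    have hl' := @refl_lab _ _ _ _ _ _ h1n hnb hl.
    case/lab_bounds: (hl') => ? ? _ _.
    by split=> //; split=> //; exists (dbar b d1), (dbar b d2).
  case=> e1 [e2 [[s1 [s2 [d1 [d2 hl]]]] [-> ->]]].
  have hl' := @refl_lab _ _ _ _ _ _ h1n hnb hl.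
  case/lab_bounds: (hl') => ? ? _ _.
  by split=> //; split=> //; exists (dbar b d1), (dbar b d2).
- move=> c1 c2 d1 d2; split.
    move=> hl; case/lab_bounds: (hl) => ? ? ? ?.
    exists (cbar n c1), (cbar n c2), (dbar b d1), (dbar b d2).
    rewrite !cbarK // !dbarK //; split=> //.
    exact: (@refl_lab _ _ _ _ _ _ h1n hnb).
  case=> e1 [e2 [f1 [f2 [hl [-> [-> [-> ->]]]]]]].
  exact: (@refl_lab _ _ _ _ _ _ h1n hnb).
Qed.
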